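(* Let $\mathcal{A}_0\supseteq\mathcal{A}_1\supseteq\mathcal{A}_2\supseteq\cdots$ be a nested sequence of additive categories and let $l\ge2$ be a natural number. Suppose that each $\mathcal{A}_m$ is $l$-uniformly regular coherent and that for every $m\in\mathbb{N}$ the inclusion $\mathcal{A}_{m+1}\to\mathcal{A}_m$ is flat. Then $\mathcal{S}(\mathcal{A}_* )$ and $\mathcal{L}(\mathcal{A}_* )$ are $l$-uniformly regular coherent.
   Context: A nested sequence of additive categories is a decreasing sequence of additive subcategories. $\mathcal{S}(\mathcal{A}_* )$ is the additive category whose objects are sequences $(A_m)_{m\ge0}$ of objects of $\mathcal{A}_0$ such that for every $l$ almost all $A_m$ lie in $\mathcal{A}_l$, and whose morphisms are sequences $(\phi_m\colon A_m\to A'_m)$ of morphisms of $\mathcal{A}_0$ such that for every $l$ almost all $\phi_m$ lie in $\mathcal{A}_l$; structure componentwise. $\mathcal{L}(\mathcal{A}_* )$ is the quotient of $\mathcal{S}(\mathcal{A}_* )$ by the full subcategory of eventually zero sequences: same objects, morphisms identified iff they agree in all but finitely many components. For an additive category $\mathcal{B}$, a $\mathbb{Z}\mathcal{B}$-module is an additive contravariant functor $\mathcal{B}\to$ abelian groups; $\mathcal{B}$ is $l$-uniformly regular coherent if every finitely presented $\mathbb{Z}\mathcal{B}$-module $M$ admits an exact sequence $0\to P_l\to\cdots\to P_0\to M\to0$ with all $P_i$ finitely generated projective. A sequence $A_0\xrightarrow{f_0}A_1\xrightarrow{f_1}A_2$ is exact at $A_1$ if $f_1\circ f_0=0$ and every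 $g\colon A\to A_1$ with $f_1\circ g=0$ is of the form $f_0\circ\bar g$; a functor is flat if it preserves exactness of such sequences. *)

(* Defs.v *)
From Stdlib Require Import Arith Lia Setoid Morphisms RelationClasses.
Set Implicit Arguments.
Unset Strict Implicit.

Record Ab : Type := MkAb {
  car :> Type;
  aeq : car -> car -> Prop;
  a0 : car;
  aadd : car -> car -> car;
  aopp : car -> car;
  aeq_equiv : Equivalence aeq;
  aadd_proper : forall x x' y y', aeq x x' -> aeq y y' -> aeq (aadd x y) (aadd x' y');
  aopp_proper : forall x x', aeq x x' -> aeq (aopp x) (aopp x');
  aaddA : forall x y z, aeq (aadd x (aadd y z)) (aadd (aadd x y) z);
  aaddC : forall x y, aeq (aadd x y) (aadd y x);
  aadd0 : forall x, aeq (aadd a0 x) x;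
  aaddN : forall x, aeq (aadd (aopp x) x) a0 }.
Arguments aeq {_} _ _.
Arguments a0 {_}.
Arguments aadd {_} _ _.
Arguments aopp {_} _.
#[global] Existing Instance aeq_equiv.
#[global] Instance aadd_Proper (G : Ab) : Proper (aeq ==> aeq ==> aeq) (@aadd G).
Proof. intros x x' H y y' H'; apply aadd_proper; auto. Qed.
#[global] Instance aopp_Proper (G : Ab) : Proper (aeq ==> aeq) (@aopp G).
Proof. intros x x' H; apply aopp_proper; auto. Qed.

Record PreAdd : Type := MkPreAdd {
  obj :> Type;
  hom : obj -> obj -> Ab;
  idm : forall A, hom A A;
  comp : forall A B C, hom B C -> hom A B -> hom A C;
  comp_proper : forall A B C (g g' : hom B C) (f f' : hom A B),
      aeq g g' -> aeq f f' -> aeq (comp g f) (comp g' f');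
  compA : forall A B C D (h : hom C D) (g : hom B C) (f : hom A B),
      aeq (comp h (comp g f)) (comp (comp h g) f);
  comp1l : forall A B (f : hom A B), aeq (comp (idm B) f) f;
  comp1r : forall A B (f : hom A B), aeq (comp f (idm A)) f;
  compDl : forall A B C (g g' : hom B C) (f : hom A B),
      aeq (comp (aadd g g') f) (aadd (comp g f) (comp g' f));
  compDr : forall A B C (g : hom B C) (f f' : hom A B),
      aeq (comp g (aadd f f')) (aadd (comp g f) (comp g f')) }.
Arguments hom {_} _ _.
Arguments idm {_} _.
Arguments comp {_ _ _ _} _ _.

Definition is_zero_obj (C : PreAdd) (Z : C) : Prop :=
  forall A : C, (exists f : hom A Z, forall g : hom A Z, aeq g f) /\
                (exists f : hom Z A, forall g : hom Z A, aeq g f).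
Definition is_biproduct (C : PreAdd) (A B P : C)
  (i1 : hom A P) (i2 : hom B P) (p1 : hom P A) (p2 : hom P B) : Prop :=
  aeq (comp p1 i1) (idm A) /\ aeq (comp p2 i2) (idm B) /\
  aeq (comp p1 i2) a0 /\ aeq (comp p2 i1) a0 /\
  aeq (aadd (comp i1 p1) (comp i2 p2)) (idm P).
Definition is_additive (C : PreAdd) : Prop :=
  (exists Z : C, is_zero_obj Z) /\
  forall A B : C, exists (P : C) (i1 : hom A P) (i2 : hom B P) (p1 : hom P A) (p2 : hom P B),
      is_biproduct i1 i2 p1 p2.

Definition exact_at (C : PreAdd) (X0 X1 X2 : C) (f0 : hom X0 X1) (f1 : hom X1 X2) : Prop :=
  aeq (comp f1 f0) a0 /\
  forall (X : C) (g : hom X X1), aeq (comp f1 g) a0 ->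
     exists gb : hom X X0, aeq g (comp f0 gb).

Definition flat (C D : PreAdd) (Fo : C -> D)
  (Fh : forall A B : C, hom A B -> hom (Fo A) (Fo B)) : Prop :=
  forall (X0 X1 X2 : C) (f0 : hom X0 X1) (f1 : hom X1 X2),
    exact_at f0 f1 -> exact_at (Fh _ _ f0) (Fh _ _ f1).

(* ---------- Z B-modules: additive contravariant functors B -> Ab ---------- *)
Record Module (C : PreAdd) : Type := MkModule {
  mob :> C -> Ab;
  mmap : forall A B : C, hom A B -> mob B -> mob A;
  mmap_proper : forall A B (f f' : hom A B) x x',
      aeq f f' -> aeq x x' -> aeq (mmap f x) (mmap f' x');
  mmap_add : forall A B (f : hom A B) x y,
      aeq (mmap f (aadd x y)) (aadd (mmap f x) (mmap f y));
  mmap_id : forall A x, aeq (mmap (idm A) x) x;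
  mmap_comp : forall A B D (g : hom B D) (f : hom A B) x,
      aeq (mmap (comp g f) x) (mmap f (mmap g x));
  mmap_addf : forall A B (f f' : hom A B) x,
      aeq (mmap (aadd f f') x) (aadd (mmap f x) (mmap f' x)) }.
Arguments mmap {_} _ {_ _} _ _.

Record MHom (C : PreAdd) (M N : Module C) : Type := MkMHom {
  mh :> forall A : C, M A -> N A;
  mh_proper : forall (A : C) (x x' : M A), aeq x x' -> aeq (@mh A x) (@mh A x');
  mh_add : forall (A : C) (x y : M A), aeq (@mh A (aadd x y)) (aadd (@mh A x) (@mh A y));
  mh_nat : forall (A B : C) (f : hom A B) (x : M B),
      aeq (@mh A (mmap M f x)) (mmap N f (@mh B x)) }.
Arguments mh {_ _ _} _ _ _.

Definition Yo (C : PreAdd) (A : C) : Module C.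
Proof.
  refine (@MkModule C (fun B => hom B A) (fun B D f g => comp g f) _ _ _ _ _).
  - intros; apply comp_proper; auto.
  - intros; apply compDl.
  - intros; apply comp1r.
  - intros; apply compA.
  - intros; apply compDr.
Defined.

Definition mh_epi (C : PreAdd) (M N : Module C) (e : MHom M N) : Prop :=
  forall (A : C) (y : N A), exists x : M A, aeq (e A x) y.
Definition mexact (C : PreAdd) (L M N : Module C) (f : MHom L M) (g : MHom M N) : Prop :=
  forall A : C, (forall x : L A, aeq (g A (f A x)) a0) /\
                (forall y : M A, aeq (g A y) a0 -> exists x : L A, aeq (f A x) y).
Definition zero_module (C : PreAdd) (M : Module C) : Prop :=
  forall (A : C) (x : M A), aeq x a0.

Definition projective (C : PreAdd) (P : Module C) : Prop :=
  forall (N N' : Module C) (p : MHom N N') (g : MHom P N'), mh_epi p ->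
    exists h : MHom P N, forall (A : C) (x : P A), aeq (p A (h A x)) (g A x).
Definition fin_gen (C : PreAdd) (M : Module C) : Prop :=
  exists (A : C) (e : MHom (Yo A) M), mh_epi e.
Definition fg_projective (C : PreAdd) (P : Module C) : Prop :=
  fin_gen P /\ projective P.
Definition fin_pres (C : PreAdd) (M : Module C) : Prop :=
  exists (A1 A0 : C) (d : MHom (Yo A1) (Yo A0)) (e : MHom (Yo A0) M),
    mexact d e /\ mh_epi e.

(* l-uniformly regular coherent: every f.p. M has an exact sequence
   0 -> P_l -> ... -> P_0 -> M -> 0 with P_i f.g. projective.
   Encoded with P_i = 0 for i > l and exactness everywhere. *)
Definition unif_reg_coherent (l : nat) (C : PreAdd) : Prop :=
  forall M : Module C, fin_pres M ->
    exists (P : nat -> Module C) (d : forall i, MHom (P (S i)) (P i)) (e : MHom (P 0) M),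
      (forall i, i <= l -> fg_projective (P i)) /\
      (forall i, l < i -> zero_module (P i)) /\
      mh_epi e /\ mexact (d 0) e /\
      (forall i, mexact (d (S i)) (d i)).

Definition subAb (G : Ab) (P : G -> Prop) (P0 : P a0)
  (Padd : forall x y, P x -> P y -> P (aadd x y))
  (Popp : forall x, P x -> P (aopp x)) : Ab.
Proof.
  refine (@MkAb {x : G | P x} (fun x y => aeq (proj1_sig x) (proj1_sig y))
           (exist _ a0 P0)
           (fun x y => exist _ (aadd (proj1_sig x) (proj1_sig y)) (Padd _ _ (proj2_sig x) (proj2_sig y)))
           (fun x => exist _ (aopp (proj1_sig x)) (Popp _ (proj2_sig x))) _ _ _ _ _ _ _); cbv beta.
  - split; red; intros. reflexivity. symmetry; auto. etransitivity; eauto.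
  - intros; apply aadd_proper; auto.
  - intros; apply aopp_proper; auto.
  - intros; apply aaddA.
  - intros; apply aaddC.
  - intros; apply aadd0.
  - intros; apply aaddN.
Defined.

(* A_0 is the ambient category; A_m given by membership predicates on objects
   and morphisms, each closed under the preadditive structure. *)
Record NestedSeq : Type := MkNested {
  ambient : PreAdd;
  ObjIn : nat -> ambient -> Prop;
  HomIn : nat -> forall A B : ambient, hom A B -> Prop;
  ObjIn_0 : forall A, ObjIn 0 A;
  HomIn_0 : forall A B (f : hom A B), @HomIn 0 A B f;
  ObjIn_dec : forall m A, ObjIn (S m) A -> ObjIn m A;
  HomIn_dec : forall m A B (f : hom A B), @HomIn (S m) A B f -> @HomIn m A B f;
  HomIn_obj : forall m A B (f : hom A B), @HomIn m A B f -> ObjIn m A /\ ObjIn m B;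
  HomIn_proper : forall m A B (f f' : hom A B), aeq f f' -> @HomIn m A B f -> @HomIn m A B f';
  HomIn_id : forall m A, ObjIn m A -> @HomIn m A A (idm A);
  HomIn_comp : forall m A B C (g : hom B C) (f : hom A B),
      @HomIn m B C g -> @HomIn m A B f -> @HomIn m A C (comp g f);
  HomIn_zero : forall m A B, ObjIn m A -> ObjIn m B -> @HomIn m A B a0;
  HomIn_add : forall m A B (f f' : hom A B),
      @HomIn m A B f -> @HomIn m A B f' -> @HomIn m A B (aadd f f');
  HomIn_opp : forall m A B (f : hom A B), @HomIn m A B f -> @HomIn m A B (aopp f) }.

Arguments ObjIn : clear implicits.
Arguments HomIn : clear implicits.
Arguments ObjIn_dec {N m A} _ : rename.
Arguments HomIn_dec {N m A B f} _ : rename.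
Arguments HomIn_id {N m A} _ : rename.
Arguments HomIn_comp {N m A B C g f} _ _ : rename.
Arguments HomIn_zero {N m A B} _ _ : rename.
Arguments HomIn_add {N m A B f f'} _ _ : rename.
Arguments HomIn_opp {N m A B f} _ : rename.

Definition subhom (N : NestedSeq) (m : nat) (X Y : {A : ambient N | ObjIn N m A}) : Ab :=
  @subAb (hom (proj1_sig X) (proj1_sig Y)) (HomIn N m (proj1_sig X) (proj1_sig Y))
    (HomIn_zero (proj2_sig X) (proj2_sig Y))
    (fun x y => HomIn_add (N:=N) (m:=m) (f:=x) (f':=y))
    (fun x => HomIn_opp (N:=N) (m:=m) (f:=x)).

Arguments subhom : clear implicits.

Definition subcat (N : NestedSeq) (m : nat) : PreAdd.
Proof.
  refine (@MkPreAdd {A : ambient N | ObjIn N m A} (subhom N m)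
     (fun X => exist _ (idm (proj1_sig X)) (HomIn_id (proj2_sig X)))
     (fun X Y Z g f => exist _ (comp (proj1_sig g) (proj1_sig f))
                              (HomIn_comp (proj2_sig g) (proj2_sig f))) _ _ _ _ _ _); cbv beta.
  - intros; apply comp_proper; auto.
  - intros; apply compA.
  - intros; apply comp1l.
  - intros; apply comp1r.
  - intros; apply compDl.
  - intros; apply compDr.
Defined.

Definition incl_obj (N : NestedSeq) (m : nat) (X : subcat N (S m)) : subcat N m :=
  exist _ (proj1_sig X) (ObjIn_dec (proj2_sig X)).
Definition incl_hom (N : NestedSeq) (m : nat) (X Y : subcat N (S m)) (f : hom X Y) :
  @hom (subcat N m) (incl_obj X) (incl_obj Y) :=
  exist _ (proj1_sig f) (HomIn_dec (proj2_sig f)).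

Definition eventually (P : nat -> Prop) : Prop := exists n0, forall m, n0 <= m -> P m.
Definition always (P : nat -> Prop) : Prop := forall m, P m.

Lemma ev_and (P Q : nat -> Prop) : eventually P -> eventually Q -> eventually (fun m => P m /\ Q m).
Proof. intros [a Ha] [b Hb]; exists (a + b); intros m Hm; split; [apply Ha|apply Hb]; lia. Qed.
Lemma ev_mono (P Q : nat -> Prop) : (forall m, P m -> Q m) -> eventually P -> eventually Q.
Proof. intros H [a Ha]; exists a; auto. Qed.

(* the two identifications of morphism sequences: componentwise (S) and
   "agree in all but finitely many components" (L) *)
Record SeqFilter : Type := MkSF {
  sf :> (nat -> Prop) -> Prop;
  sf_true : sf (fun _ => True);
  sf_mono : forall P Q : nat -> Prop, (forall m, P m -> Q m) -> sf P -> sf Q;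
  sf_and : forall P Q : nat -> Prop, sf P -> sf Q -> sf (fun m => P m /\ Q m) }.

Definition alwaysF : SeqFilter.
Proof. refine (@MkSF always _ _ _); unfold always; firstorder. Defined.
Definition eventuallyF : SeqFilter.
Proof.
  refine (@MkSF eventually _ ev_mono ev_and). exists 0; auto.
Defined.

Definition SObj (N : NestedSeq) : Type :=
  {a : nat -> ambient N | forall l, eventually (fun m => ObjIn N l (a m))}.

Lemma sf_pw (F : SeqFilter) (P : nat -> Prop) : (forall m, P m) -> F P.
Proof. intros H; apply (sf_mono (P := fun _ => True)); auto; apply sf_true. Qed.

Definition SHP (N : NestedSeq) (a b : SObj N)
  (phi : forall m, hom (proj1_sig a m) (proj1_sig b m)) : Prop :=
  forall l, eventually (fun m => HomIn N l _ _ (phi m)).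

Lemma shp_zero (N : NestedSeq) (a b : SObj N) : SHP (a:=a) (b:=b) (fun m => a0).
Proof.
  intros l; apply (ev_mono (P := fun m => ObjIn N l (proj1_sig a m) /\ ObjIn N l (proj1_sig b m))).
  + intros m [H1 H2]; apply HomIn_zero; auto.
  + apply ev_and; [apply (proj2_sig a) | apply (proj2_sig b)].
Qed.
Lemma shp_add (N : NestedSeq) (a b : SObj N) x y :
  SHP (a:=a) (b:=b) x -> SHP y -> SHP (fun m => aadd (x m) (y m)).
Proof.
  intros Hx Hy l; eapply ev_mono; [|apply ev_and; [apply (Hx l)|apply (Hy l)]].
  intros m [H1 H2]; apply HomIn_add; auto.
Qed.
Lemma shp_opp (N : NestedSeq) (a b : SObj N) x :
  SHP (a:=a) (b:=b) x -> SHP (fun m => aopp (x m)).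
Proof. intros Hx l; eapply ev_mono; [|apply (Hx l)]. intros m H; apply HomIn_opp; auto. Qed.
Lemma shp_id (N : NestedSeq) (a : SObj N) : SHP (a:=a) (b:=a) (fun m => idm (proj1_sig a m)).
Proof. intros l; eapply ev_mono; [|apply (proj2_sig a l)]; intros m H; apply HomIn_id; auto. Qed.
Lemma shp_comp (N : NestedSeq) (a b c : SObj N) g f :
  SHP (a:=b) (b:=c) g -> SHP (a:=a) (b:=b) f -> SHP (a:=a) (b:=c) (fun m => comp (g m) (f m)).
Proof.
  intros Hg Hf l; eapply ev_mono; [|apply ev_and; [apply (Hg l)|apply (Hf l)]].
  intros m [H1 H2]; apply HomIn_comp; auto.
Qed.

Definition seqAb (N : NestedSeq) (F : SeqFilter) (a b : SObj N) : Ab.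
Proof.
  refine (@MkAb {phi : forall m, hom (proj1_sig a m) (proj1_sig b m) | SHP (a:=a) (b:=b) phi}
    (fun x y => F (fun m => aeq (proj1_sig x m) (proj1_sig y m)))
    (exist _ (fun m => a0) (shp_zero a b))
    (fun x y => exist _ (fun m => aadd (proj1_sig x m) (proj1_sig y m)) (shp_add (proj2_sig x) (proj2_sig y)))
    (fun x => exist _ (fun m => aopp (proj1_sig x m)) (shp_opp (proj2_sig x))) _ _ _ _ _ _ _); cbv beta.
  - split; red; intros.
    + apply sf_pw; intros; reflexivity.
    + eapply sf_mono; [|eauto]; intros; symmetry; auto.
    + eapply sf_mono; [|apply sf_and; [exact H|exact H0]]; intros m [H1 H2]; etransitivity; eauto.
  - intros x x' y y' H1 H2; eapply sf_mono; [|apply sf_and; [exact H1|exact H2]];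
      intros m [H3 H4]; apply aadd_proper; auto.
  - intros x x' H; eapply sf_mono; [|exact H]; intros m H3; apply aopp_proper; auto.
  - intros; apply sf_pw; intros; apply aaddA.
  - intros; apply sf_pw; intros; apply aaddC.
  - intros; apply sf_pw; intros; apply aadd0.
  - intros; apply sf_pw; intros; apply aaddN.
Defined.

Arguments seqAb : clear implicits.

Definition seqcat (N : NestedSeq) (F : SeqFilter) : PreAdd.
Proof.
  refine (@MkPreAdd (SObj N) (seqAb N F)
     (fun a => exist _ (fun m => idm (proj1_sig a m)) (shp_id a))
     (fun a b c g f => exist _ (fun m => comp (proj1_sig g m) (proj1_sig f m))
                             (shp_comp (proj2_sig g) (proj2_sig f))) _ _ _ _ _ _); cbv beta.
  - intros A B C g g' f f' H1 H2; eapply sf_mono; [|apply sf_and; [exact H1|exact H2]];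
      intros m [H3 H4]; apply comp_proper; auto.
  - intros; apply sf_pw; intros; apply compA.
  - intros; apply sf_pw; intros; apply comp1l.
  - intros; apply sf_pw; intros; apply comp1r.
  - intros; apply sf_pw; intros; apply compDl.
  - intros; apply sf_pw; intros; apply compDr.
Defined.

Definition SCat (N : NestedSeq) : PreAdd := seqcat N alwaysF.
(* L(A_-): quotient by eventually-zero sequences *)
Definition LCat (N : NestedSeq) : PreAdd := seqcat N eventuallyF.

(* Main.v *)
From Stdlib Require Import Arith Lia Setoid Morphisms RelationClasses.
From Stdlib Require Import ClassicalEpsilon Classical.
Require Import Defs.
Set Implicit Arguments.
Unset Strict Implicit.

Section AbLemmas.
Variable G : Ab.
Implicit Types x y z : G.

Lemma aadd0r x : aeq (aadd x a0) x.
Proof. rewrite aaddC; apply aadd0. Qed.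
Lemma aaddNr x : aeq (aadd x (aopp x)) a0.
Proof. rewrite aaddC; apply aaddN. Qed.
Lemma acancel x y z : aeq (aadd x y) (aadd x z) -> aeq y z.
Proof.
  intros H. rewrite <- (aadd0 y), <- (aadd0 z), <- (aaddN x), <- !aaddA, H. reflexivity.
Qed.
Lemma acancel0 x y : aeq (aadd x y) x -> aeq y a0.
Proof. intros H; apply (@acancel x). rewrite H, aadd0r; reflexivity. Qed.
Lemma aopp_uniq x y : aeq (aadd x y) a0 -> aeq x (aopp y).
Proof. intros H; apply (@acancel y). rewrite aaddC, H, aaddNr; reflexivity. Qed.
Lemma asub_eq x y : aeq (aadd x (aopp y)) a0 -> aeq x y.
Proof.
  intros H. rewrite <- (aadd0r x), <- (aaddN y), aaddA, H, aadd0; reflexivity.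
Qed.
Lemma aopp0 : aeq (aopp (@a0 G)) a0.
Proof. symmetry; apply aopp_uniq; apply aadd0. Qed.
Lemma aopp_opp x : aeq (aopp (aopp x)) x.
Proof. symmetry; apply aopp_uniq; apply aaddNr. Qed.
Lemma aopp_add x y : aeq (aopp (aadd x y)) (aadd (aopp x) (aopp y)).
Proof.
  symmetry; apply aopp_uniq.
  rewrite (aaddC x y), aaddA, <- (aaddA (aopp x)), aaddN, aadd0r, aaddN; reflexivity.
Qed.
Lemma aaddAC x y z : aeq (aadd (aadd x y) z) (aadd (aadd x z) y).
Proof. rewrite <- !aaddA, (aaddC y z); reflexivity. Qed.
Lemma aaddCA x y z : aeq (aadd x (aadd y z)) (aadd y (aadd x z)).
Proof. rewrite !aaddA, (aaddC x y); reflexivity. Qed.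
Lemma asubK x y : aeq (aadd (aadd x (aopp y)) y) x.
Proof. rewrite <- aaddA, aaddN, aadd0r; reflexivity. Qed.
Lemma aaddKs x y : aeq (aadd (aadd x y) (aopp y)) x.
Proof. rewrite <- aaddA, aaddNr, aadd0r; reflexivity. Qed.
End AbLemmas.

#[global] Instance comp_Proper (C : PreAdd) (A B D : C) :
  Proper (aeq ==> aeq ==> aeq) (@comp C A B D).
Proof. intros g g' Hg f f' Hf; apply comp_proper; auto. Qed.

Section PreAddLemmas.
Variable C : PreAdd.

Lemma comp0l (A B D : C) (f : hom A B) : aeq (comp (@a0 (hom B D)) f) a0.
Proof.
  apply (@acancel0 _ (comp a0 f)). rewrite <- compDl, aadd0; reflexivity.
Qed.
Lemma comp0r (A B D : C) (g : hom B D) : aeq (comp g (@a0 (hom A B))) a0.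
Proof.
  apply (@acancel0 _ (comp g a0)). rewrite <- compDr, aadd0; reflexivity.
Qed.
Lemma compNl (A B D : C) (g : hom B D) (f : hom A B) :
  aeq (comp (aopp g) f) (aopp (comp g f)).
Proof. apply aopp_uniq. rewrite <- compDl, aaddN, comp0l; reflexivity. Qed.
Lemma compNr (A B D : C) (g : hom B D) (f : hom A B) :
  aeq (comp g (aopp f)) (aopp (comp g f)).
Proof. apply aopp_uniq. rewrite <- compDr, aaddN, comp0r; reflexivity. Qed.
End PreAddLemmas.

#[global] Instance mmap_Proper (C : PreAdd) (M : Module C) (A B : C) :
  Proper (aeq ==> aeq ==> aeq) (@mmap C M A B).
Proof. intros f f' Hf x x' Hx; apply mmap_proper; auto. Qed.
#[global] Instance mh_Proper (C : PreAdd) (M N : Module C) (h : MHom M N) (A : C) :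
  Proper (aeq ==> aeq) (h A).
Proof. intros x x' H; apply mh_proper; auto. Qed.

Lemma mh0 (C : PreAdd) (M N : Module C) (h : MHom M N) (A : C) : aeq (h A a0) a0.
Proof. apply (@acancel0 _ (h A a0)). rewrite <- mh_add, aadd0; reflexivity. Qed.
Lemma mhN (C : PreAdd) (M N : Module C) (h : MHom M N) (A : C) x :
  aeq (h A (aopp x)) (aopp (h A x)).
Proof. apply aopp_uniq. rewrite <- mh_add, aaddN, mh0; reflexivity. Qed.
Lemma mmap0 (C : PreAdd) (M : Module C) (A B : C) (f : hom A B) :
  aeq (mmap M f a0) a0.
Proof. apply (@acancel0 _ (mmap M f a0)). rewrite <- mmap_add, aadd0; reflexivity. Qed.

Lemma yo_nat (C : PreAdd) (A : C) (N : Module C) (F : MHom (Yo A) N) (X : C) (g : hom X A) :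
  aeq (F X g) (mmap N g (F A (idm A))).
Proof.
  rewrite <- mh_nat. apply mh_proper. simpl. symmetry; apply comp1l.
Qed.

Section ImMod.
Variable C : PreAdd.
Variables (B : C) (e : hom B B).
Hypothesis e_idem : aeq (comp e e) e.

Definition ImP (X : C) (g : hom X B) : Prop := aeq (comp e g) g.
Lemma ImP0 X : @ImP X a0.
Proof. unfold ImP; apply comp0r. Qed.
Lemma ImPadd X (x y : hom X B) : ImP x -> ImP y -> ImP (aadd x y).
Proof. unfold ImP; intros H1 H2; rewrite compDr, H1, H2; reflexivity. Qed.
Lemma ImPopp X (x : hom X B) : ImP x -> ImP (aopp x).
Proof. unfold ImP; intros H1; rewrite compNr, H1; reflexivity. Qed.

Definition ImAb (X : C) : Ab := @subAb (hom X B) (@ImP X) (@ImP0 X) (@ImPadd X) (@ImPopp X).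

Lemma ImP_comp X Y (g : hom Y B) (f : hom X Y) : ImP g -> ImP (comp g f).
Proof. unfold ImP; intros H; rewrite compA, H; reflexivity. Qed.

Definition ImMod : Module C.
Proof.
  refine (@MkModule C ImAb
    (fun X Y f g => exist _ (comp (proj1_sig g) f) (ImP_comp f (proj2_sig g))) _ _ _ _ _);
    simpl; intros.
  - apply comp_proper; auto.
  - apply compDl.
  - apply comp1r.
  - apply compA.
  - apply compDr.
Defined.

Lemma ImP_e X (g : hom X B) : ImP (comp e g).
Proof. unfold ImP; rewrite compA, e_idem; reflexivity. Qed.

Definition ImProj : MHom (Yo B) ImMod.
Proof.
  refine (@MkMHom C (Yo B) ImMod (fun X g => exist _ (comp e g) (ImP_e g)) _ _ _); simpl; intros.
  - rewrite H; reflexivity.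
  - apply compDr.
  - apply compA.
Defined.

Lemma ImMod_fg : fin_gen ImMod.
Proof.
  exists B, ImProj. intros X y. exists (proj1_sig y). simpl. apply (proj2_sig y).
Qed.

Lemma ImMod_proj : projective ImMod.
Proof.
  intros N N' p g Hp.
  set (y := g B (exist (@ImP B) e e_idem : ImMod B)).
  destruct (Hp B y) as [x0 Hx0].
  unshelve eexists.
  - refine (@MkMHom C ImMod N (fun X w => mmap N (proj1_sig w) x0) _ _ _); simpl; intros.
    + apply mmap_proper; [exact H | reflexivity].
    + apply mmap_addf.
    + apply mmap_comp.
  - simpl. intros A x. rewrite mh_nat, Hx0. unfold y. rewrite <- mh_nat.
    apply mh_proper. simpl. apply (proj2_sig x).
Qed.

Lemma ImMod_fgp : fg_projective ImMod.
Proof. split; [apply ImMod_fg | apply ImMod_proj]. Qed.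

Lemma ImMod_zero : aeq e a0 -> zero_module ImMod.
Proof.
  intros H X x. simpl. rewrite <- (proj2_sig x). unfold ImP. rewrite H, comp0l. reflexivity.
Qed.
End ImMod.

Record KData (T : PreAdd) (X0 : T) : Type := MkKData {
  kB : nat -> T;
  ke : forall i, hom (kB i) (kB i);
  kd0 : hom (kB 0) X0;
  kd : forall i, hom (kB (S i)) (kB i) }.

Section KDefs.
Variables (T : PreAdd) (X0 : T) (K : KData X0).
Definition Bf (i : nat) : T := match i with 0 => X0 | S j => kB K j end.
Definition ef (i : nat) : hom (Bf i) (Bf i) :=
  match i return hom (Bf i) (Bf i) with 0 => idm X0 | S j => ke K j end.
Definition df (i : nat) : hom (Bf (S i)) (Bf i) :=
  match i return hom (Bf (S i)) (Bf i) with 0 => kd0 K | S j => kd K j end.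
End KDefs.

Record KOK (T : PreAdd) (l : nat) (X1 X0 : T) (phi : hom X1 X0) (K : KData X0) : Prop := {
  k_idem : forall i, aeq (comp (ef K i) (ef K i)) (ef K i);
  k_de : forall i, aeq (comp (df K i) (ef K (S i))) (df K i);
  k_ed : forall i, aeq (comp (ef K i) (df K i)) (df K i);
  k_dd : forall i, aeq (comp (df K i) (df K (S i))) a0;
  k_u : exists u, aeq (kd0 K) (comp phi u);
  k_v : exists v, aeq phi (comp (kd0 K) v);
  k_ex : forall i (X : T) (g : hom X (Bf K (S i))),
      aeq (comp (ef K (S i)) g) g -> aeq (comp (df K i) g) a0 ->
      exists h : hom X (Bf K (S (S i))),
        aeq (comp (ef K (S (S i))) h) h /\ aeq (comp (df K (S i)) h) g;
  k_zero : forall i, l < i -> aeq (ef K i) a0 }.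

Section Build.
Variables (T : PreAdd) (l : nat).

Lemma ImP_d (B1 B0 : T) (e0 : hom B0 B0) (d : hom B1 B0)
  (Hed : aeq (comp e0 d) d) X (g : hom X B1) : ImP e0 (comp d g).
Proof. unfold ImP. rewrite compA, Hed. reflexivity. Qed.

Definition dmap (B1 B0 : T) (e1 : hom B1 B1) (e0 : hom B0 B0) (d : hom B1 B0)
  (Hed : aeq (comp e0 d) d) : MHom (ImMod e1) (ImMod e0).
Proof.
  refine (@MkMHom T (ImMod e1) (ImMod e0)
    (fun X g => exist _ (comp d (proj1_sig g)) (ImP_d Hed (proj1_sig g))) _ _ _); simpl; intros.
  - rewrite H; reflexivity.
  - apply compDr.
  - apply compA.
Defined.

Lemma Yo_phi (A1 A0 : T) (D : MHom (Yo A1) (Yo A0)) X (g : hom X A1) :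
  aeq (D X g) (comp (D A1 (idm A1)) g).
Proof. apply yo_nat. Qed.

Lemma build_urc :
  (forall (X1 X0 : T) (phi : hom X1 X0), exists K : KData X0, KOK l phi K) ->
  unif_reg_coherent l T.
Proof.
  intros HK M [A1 [A0 [D [E [HDE HE]]]]].
  set (phi := D A1 (idm A1)).
  destruct (HK A1 A0 phi) as [K HKo].
  exists (fun i => ImMod (ef K i)).
  exists (fun i => dmap (ef K (S i)) (k_ed HKo i)).
  unshelve eexists.
  { refine (@MkMHom T (ImMod (ef K 0)) M (fun X g => E X (proj1_sig g)) _ _ _); simpl; intros.
    - rewrite H; reflexivity.
    - apply mh_add.
    - exact (mh_nat E f (proj1_sig x)). }
  split; [|split; [|split; [|split]]].
  - intros i _. apply ImMod_fgp. apply (k_idem HKo).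
  - intros i Hi. apply ImMod_zero. apply (k_zero HKo); auto.
  - intros X y. destruct (HE X y) as [x Hx].
    exists (exist (@ImP T _ (ef K 0) X) x (comp1l x)). simpl. exact Hx.
  - intros X. split.
    + intros x. simpl. destruct (k_u HKo) as [u Hu].
      change (aeq (E X (comp (kd0 K) (proj1_sig x))) a0).
      rewrite Hu, <- compA. unfold phi. rewrite <- Yo_phi. apply (proj1 (HDE X)).
    + intros y Hy. simpl in Hy.
      destruct (proj2 (HDE X) _ Hy) as [x Hx].
      destruct (k_v HKo) as [v Hv].
      assert (Hp : ImP (ef K 1) (comp (ef K 1) (comp v x))) by apply ImP_e, (k_idem HKo).
      exists (exist _ _ Hp). simpl. rewrite compA.
      pose proof (k_de HKo 0) as H0. simpl in H0. simpl. rewrite H0.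
      rewrite <- Hx, Yo_phi. fold phi. rewrite Hv, compA. reflexivity.
  - intros i X. split.
    + intros x. simpl. rewrite compA. pose proof (k_dd HKo i) as H; simpl in H; rewrite H. apply comp0l.
    + intros y Hy. simpl in Hy.
      destruct (k_ex HKo (proj2_sig y) Hy) as [h [H1 H2]].
      exists (exist (@ImP _ _ (ef K (S (S i))) X) h H1). simpl. exact H2.
Qed.
End Build.

Lemma dchoice (A : Type) (B : A -> Type) (P : forall a, B a -> Prop) :
  (forall a, exists b, P a b) -> exists f : forall a, B a, forall a, P a (f a).
Proof.
  intros H. exists (fun a => proj1_sig (constructive_indefinite_description _ (H a))).
  intros a. exact (proj2_sig (constructive_indefinite_description _ (H a))).
Qed.

Lemma asub_add (G : Ab) (x y x' y' : G) :
  aeq (aadd (aadd x y) (aopp (aadd x' y'))) (aadd (aadd x (aopp x')) (aadd y (aopp y'))).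
Proof.
  rewrite aopp_add. rewrite <- !aaddA. apply aadd_proper; [reflexivity|].
  rewrite !aaddA. rewrite (aaddC y (aopp x')). reflexivity.
Qed.

Section Cok.
Variables (C : PreAdd) (X1 X0 : C) (phi : hom X1 X0).

Definition ceq (X : C) (g g' : hom X X0) : Prop :=
  exists k : hom X X1, aeq (aadd g (aopp g')) (comp phi k).

Lemma ceq_of_eq X (g g' : hom X X0) : aeq g g' -> ceq g g'.
Proof. intros H. exists a0. rewrite H, aaddNr, comp0r. reflexivity. Qed.

Definition CokAb (X : C) : Ab.
Proof.
  refine (@MkAb (hom X X0) (@ceq X) a0 aadd aopp _ _ _ _ _ _ _).
  - split.
    + intros x; apply ceq_of_eq; reflexivity.
    + intros x y [k Hk]. exists (aopp k). rewrite compNr, <- Hk, aopp_add, aopp_opp, aaddC. reflexivity.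
    + intros x y z [k Hk] [k' Hk']. exists (aadd k k'). rewrite compDr, <- Hk, <- Hk'.
      rewrite <- aaddA, (aaddA (aopp y)), aaddN, aadd0. reflexivity.
  - intros x x' y y' [k Hk] [k' Hk']. exists (aadd k k'). rewrite compDr, <- Hk, <- Hk'.
    apply asub_add.
  - intros x x' [k Hk]. exists (aopp k). rewrite compNr, <- Hk, aopp_add. reflexivity.
  - intros; apply ceq_of_eq; apply aaddA.
  - intros; apply ceq_of_eq; apply aaddC.
  - intros; apply ceq_of_eq; apply aadd0.
  - intros; apply ceq_of_eq; apply aaddN.
Defined.

Definition CokMod : Module C.
Proof.
  refine (@MkModule C CokAb (fun A B f g => comp g f) _ _ _ _ _); simpl; intros.
  - destruct H0 as [k Hk]. exists (comp k f'). rewrite compA, <- Hk, H, compDl, compNl. reflexivity.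
  - apply ceq_of_eq; apply compDl.
  - apply ceq_of_eq; apply comp1r.
  - apply ceq_of_eq; apply compA.
  - apply ceq_of_eq; apply compDr.
Defined.

Definition YoMap : MHom (Yo X1) (Yo X0).
Proof.
  refine (@MkMHom C (Yo X1) (Yo X0) (fun X g => comp phi g) _ _ _); simpl; intros.
  - rewrite H; reflexivity.
  - apply compDr.
  - apply compA.
Defined.

Definition CokProj : MHom (Yo X0) CokMod.
Proof.
  refine (@MkMHom C (Yo X0) CokMod (fun X g => g) _ _ _); simpl; intros.
  - apply ceq_of_eq; auto.
  - apply ceq_of_eq; reflexivity.
  - apply ceq_of_eq; reflexivity.
Defined.

Lemma Cok_fp : fin_pres CokMod.
Proof.
  exists X1, X0, YoMap, CokProj. split.
  - intros X. split.
    + intros x. simpl. exists x. rewrite aopp0, aadd0r. reflexivity.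
    + intros y [k Hk]. exists k. simpl. change (aeq (aadd y (aopp (@a0 (hom X X0)))) (comp phi k)) in Hk. rewrite <- Hk, aopp0, aadd0r. reflexivity.
  - intros X y. exists y. simpl. apply ceq_of_eq; reflexivity.
Qed.
End Cok.

Definition zeroMH (C : PreAdd) (M N : Module C) : MHom M N.
Proof.
  refine (@MkMHom C M N (fun X x => a0) _ _ _); simpl; intros.
  - reflexivity.
  - symmetry; apply aadd0.
  - symmetry; apply mmap0.
Defined.

Definition idMH (C : PreAdd) (M : Module C) : MHom M M.
Proof.
  refine (@MkMHom C M M (fun X x => x) _ _ _); simpl; intros; auto; reflexivity.
Defined.

Lemma zero_fgp (C : PreAdd) (M : Module C) (Z : C) : zero_module M -> fg_projective M.
Proof.
  intros HM. split.
  - exists Z, (zeroMH (Yo Z) M). intros X y. exists a0. simpl. symmetry; apply HM.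
  - intros N N' p g Hp. exists (zeroMH M N). intros A x. simpl.
    rewrite mh0, (HM A x), mh0. reflexivity.
Qed.

Record KRes (C : PreAdd) (X0 : C) : Type := MkKRes {
  rC : nat -> C;
  re : forall i, hom (rC i) (rC i);
  rd : forall i, hom (rC (S i)) (rC i);
  rc : hom (rC 0) X0 }.

Record KResOK (C : PreAdd) (l : nat) (X1 X0 : C) (phi : hom X1 X0) (R : KRes X0) : Prop := {
  r_idem : forall i, aeq (comp (re R i) (re R i)) (re R i);
  r_de : forall i, aeq (comp (rd R i) (re R (S i))) (rd R i);
  r_ed : forall i, aeq (comp (re R i) (rd R i)) (rd R i);
  r_ce : aeq (comp (rc R) (re R 0)) (rc R);
  r_dd : forall i, aeq (comp (rd R i) (rd R (S i))) a0;
  r_cd : exists t, aeq (comp (rc R) (rd R 0)) (comp phi t);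
  r_surj : forall X (g : hom X X0), exists h k, aeq g (aadd (comp (rc R) h) (comp phi k));
  r_ex0 : forall X (h : hom X (rC R 0)) (k : hom X X1),
      aeq (comp (re R 0) h) h -> aeq (comp (rc R) h) (comp phi k) ->
      exists h', aeq (comp (re R 1) h') h' /\ aeq (comp (rd R 0) h') h;
  r_ex : forall i X (g : hom X (rC R (S i))),
      aeq (comp (re R (S i)) g) g -> aeq (comp (rd R i) g) a0 ->
      exists h, aeq (comp (re R (S (S i))) h) h /\ aeq (comp (rd R (S i)) h) g;
  r_zero : forall i, l < i -> aeq (re R i) a0 }.

Section Sec.
Variables (C : PreAdd) (A : C) (P : Module C) (pi : MHom (Yo A) P) (s : MHom P (Yo A)).
Hypothesis Hps : forall X x, aeq (pi X (s X x)) x.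
Definition sec_e : hom A A := s A (pi A (idm A)).
Lemma sec_L1 X (g : hom X A) : aeq (s X (pi X g)) (comp sec_e g).
Proof. rewrite (yo_nat pi g). rewrite (mh_nat s). simpl. reflexivity. Qed.
Lemma sec_idem : aeq (comp sec_e sec_e) sec_e.
Proof. rewrite <- sec_L1. unfold sec_e. rewrite Hps. reflexivity. Qed.
Lemma sec_s_e X (x : P X) : aeq (comp sec_e (s X x)) (s X x).
Proof. rewrite <- sec_L1, Hps. reflexivity. Qed.
Lemma sec_pi_e X (g : hom X A) : aeq (pi X (comp sec_e g)) (pi X g).
Proof. rewrite <- sec_L1, Hps. reflexivity. Qed.
End Sec.

Section Sec2.
Variables (C : PreAdd) (A0 : C) (P0 : Module C) (pi0 : MHom (Yo A0) P0) (s0 : MHom P0 (Yo A0)).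
Hypothesis Hps0 : forall X x, aeq (pi0 X (s0 X x)) x.
Variables (A1 : C) (P1 : Module C) (pi1 : MHom (Yo A1) P1) (s1 : MHom P1 (Yo A1)).
Hypothesis Hps1 : forall X x, aeq (pi1 X (s1 X x)) x.
Variable dd : MHom P1 P0.
Definition sec_d : hom A1 A0 := s0 A1 (dd A1 (pi1 A1 (idm A1))).
Lemma sec_L2 X (g : hom X A1) : aeq (s0 X (dd X (pi1 X g))) (comp sec_d g).
Proof. rewrite (yo_nat pi1 g). rewrite (mh_nat dd), (mh_nat s0). simpl. reflexivity. Qed.
Lemma sec_de : aeq (comp sec_d (sec_e pi1 s1)) sec_d.
Proof. rewrite <- sec_L2. unfold sec_e. rewrite Hps1. reflexivity. Qed.
Lemma sec_ed : aeq (comp (sec_e pi0 s0) sec_d) sec_d.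
Proof. unfold sec_d. apply sec_s_e; auto. Qed.
End Sec2.

Lemma cok_iff (C : PreAdd) (X1 X0 : C) (phi : hom X1 X0) X (x y : hom X X0) :
  @aeq (CokMod phi X) x y <-> exists k, aeq (aadd x (aopp y)) (comp phi k).
Proof. split; intros H; exact H. Qed.

Lemma cok_of (C : PreAdd) (X1 X0 : C) (phi : hom X1 X0) X (x y : hom X X0) :
  aeq x y -> @aeq (CokMod phi X) x y.
Proof. apply ceq_of_eq. Qed.

Lemma asub_eq' (G : Ab) (x y z : G) : aeq (aadd x (aopp y)) z -> aeq x (aadd y z).
Proof. intros H. rewrite <- H, aaddC, asubK. reflexivity. Qed.

Lemma extract (C : PreAdd) (l : nat) : unif_reg_coherent l C ->
  forall (X1 X0 : C) (phi : hom X1 X0), exists R : KRes X0, KResOK l phi R.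
Proof.
  intros H X1 X0 phi.
  destruct (H (CokMod phi) (Cok_fp phi)) as [P [d [eps [Hfg [Hzr [Hepi [Hex0 Hex]]]]]]].
  assert (Hall : forall i, fg_projective (P i)).
  { intros i. destruct (le_lt_dec i l); [auto | apply (@zero_fgp C (P i) X0); auto]. }
  assert (Hsec : forall i, exists t : {Ci : C & (MHom (Yo Ci) (P i) * MHom (P i) (Yo Ci))%type},
             forall A x, aeq (fst (projT2 t) A (snd (projT2 t) A x)) x).
  { intros i. destruct (Hall i) as [[Ci [pi Hpi]] Hproj].
    destruct (Hproj (Yo Ci) (P i) pi (idMH (P i)) Hpi) as [s Hs].
    exists (existT _ Ci (pi, s)). simpl. exact Hs. }
  destruct (dchoice (B := fun i => {Ci : C & (MHom (Yo Ci) (P i) * MHom (P i) (Yo Ci))%type}) Hsec)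
    as [f Hf].
  set (Ci := fun i => projT1 (f i)).
  set (pi := fun i => fst (projT2 (f i)) : MHom (Yo (Ci i)) (P i)).
  set (s := fun i => snd (projT2 (f i)) : MHom (P i) (Yo (Ci i))).
  assert (Hps : forall i X x, aeq (pi i X (s i X x)) x) by (intros; apply Hf).
  set (e := fun i => sec_e (pi i) (s i)).
  set (dl := fun i => sec_d (s i) (pi (S i)) (d i)).
  set (c0 := eps (Ci 0) (pi 0 (Ci 0) (idm (Ci 0)))).
  set (c := comp c0 (e 0)).
  assert (L3 : forall X (g : hom X (Ci 0)), @aeq (CokMod phi X) (eps X (pi 0 X g)) (comp c0 g)).
  { intros X g. rewrite (yo_nat (pi 0) g), (mh_nat eps). apply cok_of. reflexivity. }
  assert (Lc : forall X (g : hom X (Ci 0)), @aeq (CokMod phi X) (eps X (pi 0 X g)) (comp c g)).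
  { intros X g. symmetry. transitivity (comp c0 (comp (e 0) g)).
    - apply cok_of. unfold c. symmetry. apply compA.
    - rewrite <- L3. unfold e. rewrite (sec_pi_e (Hps 0)). reflexivity. }
  exists (@MkKRes C X0 Ci e dl c).
  constructor; simpl.
  - intros i. apply sec_idem. apply Hps.
  - intros i. apply sec_de. apply Hps.
  - intros i. apply sec_ed. apply Hps.
  - unfold c. rewrite <- compA. unfold e. rewrite (sec_idem (Hps 0)). reflexivity.
  - intros i. unfold dl at 1. rewrite <- sec_L2. unfold dl, sec_d.
    rewrite Hps. rewrite (proj1 (Hex i _)). exact (mh0 (s i) _).
  - assert (Hc : @aeq (CokMod phi (Ci 1)) (comp c (dl 0)) a0).
    { rewrite <- Lc. unfold dl, sec_d. rewrite Hps. apply (proj1 (Hex0 _)). }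
    destruct Hc as [k Hk]. exists k. rewrite <- Hk. symmetry.
    change (aeq (aadd (comp c (dl 0)) (aopp (@a0 (hom (Ci 1) X0)))) (comp c (dl 0))).
    rewrite aopp0, aadd0r. reflexivity.
  - intros X g. destruct (Hepi X g) as [y Hy].
    assert (Hc : @aeq (CokMod phi X) g (comp c (s 0 X y))).
    { rewrite <- Lc, Hps. symmetry; exact Hy. }
    destruct Hc as [k Hk]. exists (s 0 X y), k. apply asub_eq'. exact Hk.
  - intros X h k Hh Hk.
    assert (Hc : @aeq (CokMod phi X) (eps X (pi 0 X h)) a0).
    { rewrite Lc. exists k. change (aeq (aadd (comp c h) (aopp (@a0 (hom X X0)))) (comp phi k)).
      rewrite aopp0, aadd0r. exact Hk. }
    destruct (proj2 (Hex0 X) _ Hc) as [z Hz].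
    exists (s 1 X z). split.
    + apply sec_s_e. apply Hps.
    + unfold dl. rewrite <- sec_L2, Hps, Hz, sec_L1. exact Hh.
  - intros i X g Hg Hd.
    assert (Hy : aeq (d i X (pi (S i) X g)) a0).
    { rewrite <- Hps. rewrite (sec_L2 (s i) (pi (S i)) (d i) g). change (sec_d (s i) (pi (S i)) (d i)) with (dl i). rewrite Hd. exact (mh0 (pi i) _). }
    destruct (proj2 (Hex i X) _ Hy) as [z Hz].
    exists (s (S (S i)) X z). split.
    + apply sec_s_e. apply Hps.
    + unfold dl. rewrite <- sec_L2, Hps, Hz, sec_L1. exact Hg.
  - intros i Hi. unfold e, sec_e. rewrite (Hzr i Hi _ (pi i (Ci i) (idm (Ci i)))). exact (mh0 (s i) _).
Qed.

Section Biprod.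
Variables (C : PreAdd) (A B P : C) (i1 : hom A P) (i2 : hom B P) (p1 : hom P A) (p2 : hom P B).
Hypothesis Hb : is_biproduct i1 i2 p1 p2.
Lemma bp11 : aeq (comp p1 i1) (idm A). Proof. apply Hb. Qed.
Lemma bp22 : aeq (comp p2 i2) (idm B). Proof. apply Hb. Qed.
Lemma bp12 : aeq (comp p1 i2) a0. Proof. apply Hb. Qed.
Lemma bp21 : aeq (comp p2 i1) a0. Proof. apply Hb. Qed.
Lemma bpid : aeq (aadd (comp i1 p1) (comp i2 p2)) (idm P). Proof. apply Hb. Qed.
Lemma bp11r X (f : hom X A) : aeq (comp p1 (comp i1 f)) f.
Proof. rewrite compA, bp11, comp1l; reflexivity. Qed.
Lemma bp22r X (f : hom X B) : aeq (comp p2 (comp i2 f)) f.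
Proof. rewrite compA, bp22, comp1l; reflexivity. Qed.
Lemma bp12r X (f : hom X B) : aeq (comp p1 (comp i2 f)) a0.
Proof. rewrite compA, bp12, comp0l; reflexivity. Qed.
Lemma bp21r X (f : hom X A) : aeq (comp p2 (comp i1 f)) a0.
Proof. rewrite compA, bp21, comp0l; reflexivity. Qed.
Lemma bp_in_ext X (g g' : hom X P) :
  aeq (comp p1 g) (comp p1 g') -> aeq (comp p2 g) (comp p2 g') -> aeq g g'.
Proof.
  intros H1 H2. rewrite <- (comp1l g), <- (comp1l g'), <- bpid, !compDl, <- !compA, H1, H2.
  reflexivity.
Qed.
Lemma bp_out_ext Y (g g' : hom P Y) :
  aeq (comp g i1) (comp g' i1) -> aeq (comp g i2) (comp g' i2) -> aeq g g'.
Proof.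
  intros H1 H2. rewrite <- (comp1r g), <- (comp1r g'), <- bpid, !compDr, !compA, H1, H2.
  reflexivity.
Qed.
Lemma bp_eta X (g : hom X P) : aeq g (aadd (comp i1 (comp p1 g)) (comp i2 (comp p2 g))).
Proof. apply bp_in_ext; rewrite compDr, ?bp11r, ?bp12r; rewrite ?bp21r, ?bp22r, ?aadd0, ?aadd0r;
  reflexivity. Qed.
End Biprod.

Ltac cnorm := repeat first [ rewrite compDl | rewrite compDr | rewrite compNl | rewrite compNr
  | rewrite <- compA | rewrite comp0l | rewrite comp0r | rewrite comp1l | rewrite comp1r ].
Ltac bsimp Hb := repeat first [ rewrite (bp11r Hb) | rewrite (bp22r Hb) | rewrite (bp12r Hb)
  | rewrite (bp21r Hb) | rewrite (bp11 Hb) | rewrite (bp22 Hb) | rewrite (bp12 Hb) | rewrite (bp21 Hb) ].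
Ltac asimp := repeat first [ rewrite comp0l | rewrite comp0r | rewrite comp1l | rewrite comp1r
  | rewrite aadd0 | rewrite aadd0r | rewrite aopp0 | rewrite aopp_opp ].
Ltac full Hb := cnorm; bsimp Hb; asimp; cnorm; asimp.

Lemma rassoc (C : PreAdd) (A B D : C) (g : hom B D) (f : hom A B) (h : hom A D) :
  aeq (comp g f) h -> forall X (x : hom X A), aeq (comp g (comp f x)) (comp h x).
Proof. intros H X x. rewrite compA, H. reflexivity. Qed.

Lemma ab_l1 (G : Ab) (a b d : G) : aeq (aadd (aadd a (aopp b)) (aopp d)) a0 -> aeq (aadd b d) a.
Proof. intros H. apply asub_eq in H. apply asub_eq' in H. symmetry; exact H. Qed.

Lemma schanuel (C : PreAdd) (l : nat) (X1 X0 : C) (phi : hom X1 X0) (R : KRes X0) :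
  2 <= l -> is_additive C -> KResOK l phi R -> exists K : KData X0, KOK l phi K.
Proof.
  intros Hl Hadd HR.
  destruct R as [Cc e dl c].
  destruct HR as [Hidem Hde Hed Hce Hdd Hcd Hsurj Hex0 Hex Hzero]; simpl in *.
  destruct (proj2 Hadd (Cc 1) X0) as [Q1 [a1 [b1 [pa1 [pb1 Hb1]]]]].
  destruct (proj2 Hadd (Cc 2) (Cc 0)) as [Q2 [a2 [b2 [pa2 [pb2 Hb2]]]]].
  destruct (Hsurj X0 (idm X0)) as [h0 [k0 Hid]].
  set (ga := comp (e 0) h0).
  assert (Hcg : aeq (comp c ga) (comp c h0)) by (unfold ga; rewrite compA, Hce; reflexivity).
  assert (Heg : aeq (comp (e 0) ga) ga) by (unfold ga; rewrite compA, Hidem; reflexivity).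
  assert (Hcg1 : aeq (comp c ga) (aadd (idm X0) (aopp (comp phi k0)))).
  { rewrite Hcg, Hid, aaddKs. reflexivity. }
  destruct (Hex0 (Cc 0) (aadd (e 0) (aopp (comp ga c))) (comp k0 c)) as [s0 [Hs0e Hs0d]].
  { cnorm. rewrite Hidem, compA, Heg. reflexivity. }
  { cnorm. rewrite Hce, compA, Hcg1. cnorm. rewrite aopp_add, aopp_opp, aaddA, aaddNr, aadd0.
    rewrite compA. reflexivity. }
  set (sg := comp s0 (e 0)).
  assert (Hsge : aeq (comp (e 1) sg) sg) by (unfold sg; rewrite compA, Hs0e; reflexivity).
  assert (Hsge0 : aeq (comp sg (e 0)) sg) by (unfold sg; rewrite <- compA, Hidem; reflexivity).
  assert (Hsgd : aeq (comp (dl 0) sg) (aadd (e 0) (aopp (comp ga c)))).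
  { unfold sg. rewrite compA, Hs0d. cnorm. rewrite Hidem, Hce. reflexivity. }
  destruct (Hex0 X1 (comp ga phi) (aadd (idm X1) (aopp (comp k0 phi)))) as [w [Hwe Hwd]].
  { rewrite compA, Heg. reflexivity. }
  { rewrite compA, Hcg1. cnorm. rewrite compA. reflexivity. }
  set (e1h := aadd (comp a1 (comp (e 1) pa1)) (comp b1 pb1)).
  set (e2h := aadd (comp a2 (comp (e 2) pa2)) (comp b2 (comp (e 0) pb2))).
  set (D0 := aadd (aadd pb1 (aopp (comp c (comp ga pb1)))) (aopp (comp c (comp (dl 0) pa1)))).
  set (D1 := aadd (comp a1 (aadd (comp (dl 1) pa2) (comp sg pb2))) (comp b1 (comp c pb2))).
  set (D2 := comp a2 (dl 2)).
  pose (Bq := fun j => match j with 0 => Q1 | 1 => Q2 | S (S j') => Cc (S (S (S j'))) end).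
  pose (eq := fun j => match j as j0 return hom (Bq j0) (Bq j0) with
                        0 => e1h | 1 => e2h | S (S j') => e (S (S (S j'))) end).
  pose (dq := fun j => match j as j0 return hom (Bq (S j0)) (Bq j0) with
                        0 => D1 | 1 => D2 | S (S j') => dl (S (S (S j'))) end).
  exists (@MkKData C X0 Bq eq D0 dq).
  constructor.
  - intros [|[|[|i]]]; simpl.
    + apply comp1l.
    + unfold e1h. apply (bp_out_ext Hb1); full Hb1; rewrite ?Hidem; reflexivity.
    + unfold e2h. apply (bp_out_ext Hb2); full Hb2; rewrite ?Hidem; reflexivity.
    + apply Hidem.
  - intros [|[|[|i]]]; simpl.
    + unfold D0, e1h. apply (bp_out_ext Hb1); full Hb1; rewrite ?(rassoc (Hde 0)), ?(Hde 0); reflexivity.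
    + unfold D1, e2h. apply (bp_out_ext Hb2); full Hb2;
        rewrite ?(rassoc (Hde 1)), ?(Hde 1), ?(rassoc Hsge0), ?Hsge0, ?(rassoc Hce), ?Hce; reflexivity.
    + unfold D2. cnorm. rewrite Hde. reflexivity.
    + apply Hde.
  - intros [|[|[|i]]]; simpl.
    + apply comp1l.
    + unfold D1, e1h. apply (bp_in_ext Hb1); full Hb1;
        rewrite ?(rassoc (Hed 1)), ?(Hed 1), ?(rassoc Hsge), ?Hsge; reflexivity.
    + unfold D2, e2h. full Hb2. rewrite ?(rassoc (Hed 2)), ?(Hed 2). reflexivity.
    + apply Hed.
  - intros [|[|[|i]]]; simpl.
    + unfold D0, D1. apply (bp_out_ext Hb2).
      * full Hb2. full Hb1. rewrite ?(rassoc (Hdd 0)), ?(Hdd 0). asimp. reflexivity.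
      * full Hb2. full Hb1. rewrite ?(rassoc Hsgd), ?Hsgd. cnorm. rewrite Hce. apply aaddNr.
    + unfold D1, D2. apply (bp_in_ext Hb1); full Hb1; full Hb2;
        rewrite ?(rassoc (Hdd 1)), ?(Hdd 1); asimp; reflexivity.
    + unfold D2. cnorm. rewrite ?(rassoc (Hdd 2)), ?(Hdd 2). asimp. reflexivity.
    + apply Hdd.
  - destruct Hcd as [t Ht]. exists (aadd (comp k0 pb1) (aopp (comp t pa1))). simpl. unfold D0.
    rewrite (rassoc Ht), (rassoc Hcg1). cnorm.
    rewrite aopp_add, aopp_opp, aaddA, aaddNr, aadd0. reflexivity.
  - exists (aadd (comp b1 phi) (aopp (comp a1 w))). simpl. unfold D0. full Hb1.
    rewrite ?(rassoc Hwd), ?Hwd. rewrite asubK. reflexivity.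
  - intros [|[|[|i]]] X g Hg Hd; simpl in *.
    + assert (Hp : aeq (comp (e 1) (comp pa1 g)) (comp pa1 g)).
      { rewrite <- Hg at 2. unfold e1h. full Hb1. reflexivity. }
      assert (Hx : aeq (aadd (comp c (comp ga (comp pb1 g))) (comp c (comp (dl 0) (comp pa1 g))))
                       (comp pb1 g)).
      { apply ab_l1. rewrite <- Hd. unfold D0. cnorm. reflexivity. }
      pose (y0 := aadd (comp ga (comp pb1 g)) (comp (dl 0) (comp pa1 g))).
      assert (Hcy : aeq (comp c y0) (comp pb1 g)) by (unfold y0; cnorm; exact Hx).
      assert (Hey : aeq (comp (e 0) y0) y0).
      { unfold y0. cnorm. rewrite (rassoc Heg), (rassoc (Hed 0)). reflexivity. }
      destruct (Hex 0 X (aadd (comp pa1 g) (aopp (comp sg y0)))) as [q [Hq2 Hq1]].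
      { cnorm. rewrite Hp, (rassoc Hsge). reflexivity. }
      { cnorm. rewrite (rassoc Hsgd). cnorm. rewrite Hey, Hcy. unfold y0.
        rewrite (aaddC (comp ga (comp pb1 g))), aaddKs, aaddNr. reflexivity. }
      exists (aadd (comp a2 q) (comp b2 y0)). split.
      * unfold e2h. full Hb2. rewrite Hq2, Hey. reflexivity.
      * unfold D1. apply (bp_in_ext Hb1); full Hb1; full Hb2.
        -- rewrite Hq1, asubK. reflexivity.
        -- exact Hcy.
    + assert (Hq : aeq (comp (e 2) (comp pa2 g)) (comp pa2 g)).
      { rewrite <- Hg at 2. unfold e2h. full Hb2. reflexivity. }
      assert (Hy : aeq (comp (e 0) (comp pb2 g)) (comp pb2 g)).
      { rewrite <- Hg at 2. unfold e2h. full Hb2. reflexivity. }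
      assert (H1 : aeq (aadd (comp (dl 1) (comp pa2 g)) (comp sg (comp pb2 g))) a0).
      { transitivity (comp pa1 (comp D1 g)).
        - unfold D1. full Hb1. reflexivity.
        - rewrite Hd. apply comp0r. }
      assert (H2 : aeq (comp c (comp pb2 g)) a0).
      { transitivity (comp pb1 (comp D1 g)).
        - unfold D1. full Hb1. reflexivity.
        - rewrite Hd. apply comp0r. }
      assert (H3 : aeq (comp (dl 0) (aadd (comp (dl 1) (comp pa2 g)) (comp sg (comp pb2 g)))) a0)
        by (rewrite H1; apply comp0r).
      revert H3. cnorm. rewrite (rassoc (Hdd 0)), (rassoc Hsgd). cnorm. rewrite Hy, H2. asimp.
      intros Hy0.
      assert (Hq1 : aeq (comp (dl 1) (comp pa2 g)) a0).
      { rewrite <- H1, Hy0. asimp. reflexivity. }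
      destruct (Hex 1 X (comp pa2 g) Hq Hq1) as [h [Hh3 Hh]].
      exists h. split; [exact Hh3|].
      unfold D2. apply (bp_in_ext Hb2); full Hb2.
      * exact Hh.
      * symmetry; exact Hy0.
    + apply Hex; auto.
      transitivity (comp pa2 (comp D2 g)).
      * unfold D2. full Hb2. reflexivity.
      * rewrite Hd. apply comp0r.
    + apply Hex; auto.
  - intros [|[|[|i]]] Hi; simpl; try lia. apply Hzero; lia.
Qed.

Section Lower.
Variable N : NestedSeq.

Lemma HomIn_le k j (A B : ambient N) (f : hom A B) : HomIn N k A B f -> j <= k -> HomIn N j A B f.
Proof.
  induction k as [|k IH]; intros H Hj.
  - assert (j = 0) by lia; subst; auto.
  - destruct (Nat.eq_dec j (S k)) as [->|Hne]; auto.
    apply IH; [apply HomIn_dec; auto | lia].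
Qed.
Lemma ObjIn_le k j (A : ambient N) : ObjIn N k A -> j <= k -> ObjIn N j A.
Proof.
  induction k as [|k IH]; intros H Hj.
  - assert (j = 0) by lia; subst; auto.
  - destruct (Nat.eq_dec j (S k)) as [->|Hne]; auto.
    apply IH; [apply ObjIn_dec; auto | lia].
Qed.

Definition Exj (j : nat) (X0 X1 X2 : ambient N) (f0 : hom X0 X1) (f1 : hom X1 X2) : Prop :=
  aeq (comp f1 f0) a0 /\
  forall (X : ambient N) (g : hom X X1), HomIn N j _ _ g -> aeq (comp f1 g) a0 ->
    exists gb : hom X X0, HomIn N j _ _ gb /\ aeq g (comp f0 gb).

Lemma exact_to_Exj j (X0 X1 X2 : subcat N j) (f0 : hom X0 X1) (f1 : hom X1 X2) :
  exact_at f0 f1 -> Exj j (proj1_sig f0) (proj1_sig f1).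
Proof.
  intros [H1 H2]. split; [exact H1|].
  intros X g Hg Hz.
  set (Xs := exist (fun A => ObjIn N j A) X (proj1 (HomIn_obj Hg)) : subcat N j).
  set (gs := exist (HomIn N j X (proj1_sig X1)) g Hg : @hom (subcat N j) Xs X1).
  destruct (H2 Xs gs Hz) as [gb Hgb].
  exists (proj1_sig gb). split; [exact (proj2_sig gb) | exact Hgb].
Qed.

Lemma Exj_to_exact j (X0 X1 X2 : subcat N j) (f0 : hom X0 X1) (f1 : hom X1 X2) :
  Exj j (proj1_sig f0) (proj1_sig f1) -> exact_at f0 f1.
Proof.
  intros [H1 H2]. split; [exact H1|].
  intros X g Hz.
  destruct (H2 (proj1_sig X) (proj1_sig g) (proj2_sig g) Hz) as [gb [Hgb1 Hgb2]].
  exists (exist _ gb Hgb1). exact Hgb2.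
Qed.

Hypothesis Hflat : forall m, flat (@incl_hom N m).

Lemma Exj_down m (X0 X1 X2 : ambient N) (f0 : hom X0 X1) (f1 : hom X1 X2) :
  HomIn N (S m) _ _ f0 -> HomIn N (S m) _ _ f1 -> Exj (S m) f0 f1 -> Exj m f0 f1.
Proof.
  intros H0 H1 HE.
  set (Y0 := exist (fun A => ObjIn N (S m) A) X0 (proj1 (HomIn_obj H0)) : subcat N (S m)).
  set (Y1 := exist (fun A => ObjIn N (S m) A) X1 (proj2 (HomIn_obj H0)) : subcat N (S m)).
  set (Y2 := exist (fun A => ObjIn N (S m) A) X2 (proj2 (HomIn_obj H1)) : subcat N (S m)).
  set (g0 := exist (HomIn N (S m) X0 X1) f0 H0 : @hom (subcat N (S m)) Y0 Y1).
  set (g1 := exist (HomIn N (S m) X1 X2) f1 H1 : @hom (subcat N (S m)) Y1 Y2).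
  assert (He : exact_at g0 g1) by (apply Exj_to_exact; exact HE).
  pose proof (Hflat (m:=m) He) as He2.
  apply exact_to_Exj in He2. exact He2.
Qed.

Lemma Exj_le k j (X0 X1 X2 : ambient N) (f0 : hom X0 X1) (f1 : hom X1 X2) :
  j <= k -> HomIn N k _ _ f0 -> HomIn N k _ _ f1 -> Exj k f0 f1 -> Exj j f0 f1.
Proof.
  induction k as [|k IH]; intros Hj H0 H1 HE.
  - assert (j = 0) by lia; subst; auto.
  - destruct (Nat.eq_dec j (S k)) as [->|Hne]; auto.
    apply IH; [lia | apply HomIn_dec; auto | apply HomIn_dec; auto | apply Exj_down; auto].
Qed.
End Lower.

Lemma lower_ex (N : NestedSeq) (l k : nat) (X1 X0 : subcat N k) (phi : hom X1 X0)
  (K : KData X0) (HK : KOK l phi K) (Hadd : is_additive (subcat N k))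
  (Hflat : forall m, flat (@incl_hom N m)) :
  forall j i (X : ambient N) (g : hom X (proj1_sig (Bf K (S i)))),
    j <= k -> HomIn N j _ _ g ->
    aeq (comp (proj1_sig (ef K (S i))) g) g -> aeq (comp (proj1_sig (df K i)) g) a0 ->
    exists h : hom X (proj1_sig (Bf K (S (S i)))),
      HomIn N j _ _ h /\ aeq (comp (proj1_sig (ef K (S (S i)))) h) h /\
      aeq (comp (proj1_sig (df K (S i))) h) g.
Proof.
  intros j i X g Hjk Hg Heg Hdg.
  destruct (proj2 Hadd (Bf K (S (S i))) (Bf K (S i))) as [W [i1 [i2 [p1 [p2 Hb]]]]].
  set (f := aadd (comp (df K (S i)) p1) (comp (aadd (idm _) (aopp (ef K (S i)))) p2)).
  assert (Hex : exact_at f (df K i)).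
  { split.
    - unfold f. cnorm. rewrite (rassoc (k_dd HK i)), (rassoc (k_de HK i)). asimp.
      apply aaddNr.
    - intros Y g' Hg'.
      destruct (k_ex HK (g := comp (ef K (S i)) g')) as [h' [He' Hd']].
      { rewrite compA, (k_idem HK). reflexivity. }
      { rewrite compA, (k_de HK). exact Hg'. }
      exists (aadd (comp i1 h') (comp i2 g')). unfold f. full Hb.
      rewrite Hd'. rewrite aaddC, asubK. reflexivity. }
  apply exact_to_Exj in Hex.
  apply (Exj_le Hflat (k := k) (j := j)) in Hex; [| exact Hjk | exact (proj2_sig f) | exact (proj2_sig (df K i))].
  destruct (proj2 Hex X g Hg Hdg) as [w [Hw1 Hw2]].
  set (e2 := proj1_sig (ef K (S (S i)))).
  set (e1 := proj1_sig (ef K (S i))).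
  set (d1 := proj1_sig (df K (S i))).
  assert (Hid2 : aeq (comp e2 e2) e2) by exact (k_idem HK (S (S i))).
  assert (Hid1 : aeq (comp e1 e1) e1) by exact (k_idem HK (S i)).
  assert (Hed1 : aeq (comp e1 d1) d1) by exact (k_ed HK (S i)).
  assert (Hde1 : aeq (comp d1 e2) d1) by exact (k_de HK (S i)).
  assert (Hf : proj1_sig f = aadd (comp d1 (proj1_sig p1)) (comp (aadd (idm _) (aopp e1)) (proj1_sig p2)))
    by reflexivity.
  exists (comp e2 (comp (proj1_sig p1) w)). split; [|split].
  - apply HomIn_comp; [apply (HomIn_le (proj2_sig (ef K (S (S i))))); exact Hjk|].
    apply HomIn_comp; [apply (HomIn_le (proj2_sig p1)); exact Hjk | exact Hw1].
  - rewrite compA, Hid2. reflexivity.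
  - rewrite compA, Hde1. rewrite <- Heg, Hw2. fold e1. rewrite Hf. cnorm.
    rewrite (rassoc Hed1), (rassoc Hid1). rewrite aaddNr, aadd0r. reflexivity.
Qed.

Fixpoint lv (P : nat -> Prop) (n : nat) : nat :=
  match n with
  | 0 => 0
  | S n' => if excluded_middle_informative (P (S n')) then S n' else lv P n'
  end.

Lemma lv_P (P : nat -> Prop) n : P 0 -> P (lv P n).
Proof.
  intros H0; induction n as [|n IH]; simpl; auto.
  destruct (excluded_middle_informative (P (S n))); auto.
Qed.
Lemma lv_max (P : nat -> Prop) n j : j <= n -> P j -> j <= lv P n.
Proof.
  induction n as [|n IH]; intros Hj HP; simpl.
  - lia.
  - destruct (excluded_middle_informative (P (S n))) as [H|H]; [lia|].
    destruct (Nat.eq_dec j (S n)) as [->|Hne]; [contradiction|]. apply IH; auto; lia.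
Qed.

Section Assemble.
Variables (N : NestedSeq) (l : nat) (F : SeqFilter).
Hypothesis Hl : 2 <= l.
Hypothesis Hadd : forall m, is_additive (subcat N m).
Hypothesis Hurc : forall m, unif_reg_coherent l (subcat N m).
Hypothesis Hflat : forall m, flat (@incl_hom N m).

Lemma seq_eq_pw (a b : seqcat N F) (x y : hom a b) :
  (forall m, aeq (proj1_sig x m) (proj1_sig y m)) -> aeq x y.
Proof. intros H. exact (sf_pw F H). Qed.
Lemma seq_eq_F (a b : seqcat N F) (x y : hom a b) (P : nat -> Prop) :
  F P -> (forall m, P m -> aeq (proj1_sig x m) (proj1_sig y m)) -> aeq x y.
Proof. intros HP H. exact (sf_mono (s:=F) H HP). Qed.

Lemma assemble (X1 X0 : seqcat N F) (phi : hom X1 X0) : exists K : KData X0, KOK l phi K.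
Proof.
  pose (phim := fun m => proj1_sig phi m).
  pose (kk := fun m => lv (fun n => HomIn N n _ _ (phim m)) m).
  assert (Hkk : forall m, HomIn N (kk m) _ _ (phim m)) by (intros m; apply lv_P, HomIn_0).
  assert (Hkev : forall j, eventually (fun m => j <= kk m)).
  { intros j. destruct (proj2_sig phi j) as [n0 Hn0]. exists (max n0 j). intros m Hm.
    apply lv_max; [lia | apply Hn0; lia]. }
  pose (X1s := fun m => exist (fun A => ObjIn N (kk m) A) (proj1_sig X1 m)
                              (proj1 (HomIn_obj (Hkk m))) : subcat N (kk m)).
  pose (X0s := fun m => exist (fun A => ObjIn N (kk m) A) (proj1_sig X0 m)
                              (proj2 (HomIn_obj (Hkk m))) : subcat N (kk m)).
  pose (phis := fun m => exist (HomIn N (kk m) (proj1_sig X1 m) (proj1_sig X0 m)) (phim m) (Hkk m)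
                          : @hom (subcat N (kk m)) (X1s m) (X0s m)).
  assert (HKex : forall m, exists K : KData (X0s m), KOK l (phis m) K).
  { intros m. destruct (extract (@Hurc (kk m)) (phis m)) as [R HR].
    exact (schanuel Hl (Hadd (kk m)) HR). }
  destruct (dchoice HKex) as [Km HKm].
  assert (Hobj : forall (a : forall m, subcat N (kk m)) j,
             eventually (fun m => ObjIn N j (proj1_sig (a m)))).
  { intros a j. apply (ev_mono (P := fun m => j <= kk m)); [|apply Hkev].
    intros m Hm. exact (ObjIn_le (proj2_sig (a m)) Hm). }
  assert (Hshp : forall (a b : forall m, subcat N (kk m)) (f : forall m, @hom (subcat N (kk m)) (a m) (b m)) j,
             eventually (fun m => HomIn N j _ _ (proj1_sig (f m)))).
  { intros a b f j. apply (ev_mono (P := fun m => j <= kk m)); [|apply Hkev].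
    intros m Hm. exact (HomIn_le (proj2_sig (f m)) Hm). }
  pose (sB := fun i => exist _ (fun m => proj1_sig (kB (Km m) i)) (Hobj (fun m => kB (Km m) i)) : SObj N).
  pose (sE := fun i => exist _ (fun m => proj1_sig (ke (Km m) i)) (Hshp _ _ (fun m => ke (Km m) i))
                : @hom (seqcat N F) (sB i) (sB i)).
  pose (sD0 := exist _ (fun m => proj1_sig (kd0 (Km m))) (Hshp _ _ (fun m => kd0 (Km m)))
                : @hom (seqcat N F) (sB 0) X0).
  pose (sD := fun i => exist _ (fun m => proj1_sig (kd (Km m) i)) (Hshp _ _ (fun m => kd (Km m) i))
                : @hom (seqcat N F) (sB (S i)) (sB i)).
  exists (@MkKData (seqcat N F) X0 sB sE sD0 sD).
  constructor.
  - intros [|i]; apply seq_eq_pw; intros m; [exact (k_idem (HKm m) 0) | exact (k_idem (HKm m) (S i))].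
  - intros [|i]; apply seq_eq_pw; intros m; [exact (k_de (HKm m) 0) | exact (k_de (HKm m) (S i))].
  - intros [|i]; apply seq_eq_pw; intros m; [exact (k_ed (HKm m) 0) | exact (k_ed (HKm m) (S i))].
  - intros [|i]; apply seq_eq_pw; intros m; [exact (k_dd (HKm m) 0) | exact (k_dd (HKm m) (S i))].
  - destruct (dchoice (fun m => k_u (HKm m))) as [u Hu].
    exists (exist _ (fun m => proj1_sig (u m)) (Hshp _ _ u)).
    apply seq_eq_pw; intros m; exact (Hu m).
  - destruct (dchoice (fun m => k_v (HKm m))) as [v Hv].
    exists (exist _ (fun m => proj1_sig (v m)) (Hshp _ _ v)).
    apply seq_eq_pw; intros m; exact (Hv m).
  - assert (Hlift : forall i (X : SObj N)
        (g : forall m, hom (proj1_sig X m) (proj1_sig (Bf (Km m) (S i)))),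
        (forall j, eventually (fun m => HomIn N j _ _ (g m))) ->
        exists h : forall m, hom (proj1_sig X m) (proj1_sig (Bf (Km m) (S (S i)))),
          (forall j, eventually (fun m => HomIn N j _ _ (h m))) /\
          (forall m, aeq (comp (proj1_sig (ef (Km m) (S (S i)))) (h m)) (h m)) /\
          (forall m, aeq (comp (proj1_sig (ef (Km m) (S i))) (g m)) (g m) ->
                     aeq (comp (proj1_sig (df (Km m) i)) (g m)) a0 ->
                     aeq (comp (proj1_sig (df (Km m) (S i))) (h m)) (g m))).
    { intros i X g Hg.
      pose (jm := fun m => lv (fun n => n <= kk m /\ HomIn N n _ _ (g m)) m).
      assert (Hjm : forall m, jm m <= kk m /\ HomIn N (jm m) _ _ (g m)).
      { intros m. apply lv_P. split; [lia | apply HomIn_0]. }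
      assert (Hh : forall m, exists hm : hom (proj1_sig X m) (proj1_sig (Bf (Km m) (S (S i)))),
                 HomIn N (jm m) _ _ hm /\
                 aeq (comp (proj1_sig (ef (Km m) (S (S i)))) hm) hm /\
                 (aeq (comp (proj1_sig (ef (Km m) (S i))) (g m)) (g m) ->
                  aeq (comp (proj1_sig (df (Km m) i)) (g m)) a0 ->
                  aeq (comp (proj1_sig (df (Km m) (S i))) hm) (g m))).
      { intros m.
        destruct (classic (aeq (comp (proj1_sig (ef (Km m) (S i))) (g m)) (g m) /\
                           aeq (comp (proj1_sig (df (Km m) i)) (g m)) a0)) as [[c1 c2]|nc].
        - destruct (lower_ex (HKm m) (Hadd (kk m)) Hflat (proj1 (Hjm m)) (proj2 (Hjm m)) c1 c2)
            as [h [H1 [H2 H3]]].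
          exists h. auto.
        - exists a0. split; [|split].
          + apply HomIn_zero.
            * exact (proj1 (HomIn_obj (proj2 (Hjm m)))).
            * exact (ObjIn_le (proj2_sig (Bf (Km m) (S (S i)))) (proj1 (Hjm m))).
          + apply comp0r.
          + intros c1 c2; exfalso; apply nc; auto. }
      destruct (dchoice Hh) as [h Hh'].
      exists h. split; [|split].
      - intros j. destruct (ev_and (Hg j) (Hkev j)) as [n0 Hn0].
        exists (max n0 j). intros m Hm. destruct (Hn0 m ltac:(lia)) as [Hg1 Hk1].
        apply (HomIn_le (proj1 (Hh' m))). apply lv_max; [lia | auto].
      - intros m; apply Hh'.
      - intros m; apply Hh'. }
    intros [|i] X g Hg Hd.
    + destruct (Hlift 0 X (proj1_sig g) (proj2_sig g)) as [h [Hh1 [Hh2 Hh3]]].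
      exists (exist _ h Hh1). split.
      * apply seq_eq_pw. exact Hh2.
      * eapply seq_eq_F; [apply sf_and; [exact Hg | exact Hd]|].
        intros m [H1 H2]. exact (Hh3 m H1 H2).
    + destruct (Hlift (S i) X (proj1_sig g) (proj2_sig g)) as [h [Hh1 [Hh2 Hh3]]].
      exists (exist _ h Hh1). split.
      * apply seq_eq_pw. exact Hh2.
      * eapply seq_eq_F; [apply sf_and; [exact Hg | exact Hd]|].
        intros m [H1 H2]. exact (Hh3 m H1 H2).
  - intros [|i] Hi; [lia|]. apply seq_eq_pw; intros m; exact (k_zero (HKm m) Hi).
Qed.
End Assemble.

Theorem mainTheorem9 (N : NestedSeq) (l : nat) :
  2 <= l ->
  (forall m : nat, is_additive (subcat N m)) ->
  (forall m : nat, unif_reg_coherent l (subcat N m)) ->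
  (forall m : nat, flat (@incl_hom N m)) ->
  unif_reg_coherent l (SCat N) /\ unif_reg_coherent l (LCat N).
Proof.
  intros Hl Hadd Hurc Hflat. split; apply build_urc; intros X1 X0 phi;
    apply (assemble Hl Hadd Hurc Hflat).
Qed.
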